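(* Let $P_n$ be a path on $n$ vertices with an arbitrary total order on its vertices. Then $R_o(P_n,P_n)\le 2^{\lceil\log_2 n\rceil\cdot(\lceil\log_2 n\rceil+1)}$.
   Context: An ordered graph is a graph with a total order $\prec$ on its vertices. An ordered graph $F$ is contained in an ordered graph $H$ if there is an injective map $V(F)\to V(H)$ preserving both the vertex order and adjacency. The ordered Ramsey number $R_o(F,G)$ is the smallest $N$ such that every red/blue colouring of the edges of the ordered complete graph $K_N$ contains a blue copy of $F$ or a red copy of $G$. *)

(* Defs.v *)
From mathcomp Require Import all_boot all_fingroup.
Set Implicit Arguments. Unset Strict Implicit. Unset Printing Implicit Defensive.

(* An ordered graph on n vertices: vertex set 'I_n, ordered by the natural
   order of ordinals; adjacency given by a relation (intended symmetric and
   irreflexive). *)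

Definition ord_contains (m N : nat) (eF : rel 'I_m) (eH : rel 'I_N) : Prop :=
  exists f : 'I_m -> 'I_N,
    (forall i j : 'I_m, i < j -> f i < f j) /\
    (forall i j : 'I_m, eF i j -> eH (f i) (f j)).

(* A red/blue colouring of the edges of the ordered complete graph K_N:
   a symmetric function c; c i j = true means blue, false means red. *)
Definition colouring (N : nat) (c : 'I_N -> 'I_N -> bool) : Prop :=
  forall i j, c i j = c j i.

Definition blue_graph N (c : 'I_N -> 'I_N -> bool) : rel 'I_N :=
  fun i j => (i != j) && c i j.
Definition red_graph N (c : 'I_N -> 'I_N -> bool) : rel 'I_N :=
  fun i j => (i != j) && ~~ c i j.

Definition ramsey_arrow (m k : nat) (eF : rel 'I_m) (eG : rel 'I_k) (N : nat)
  : Prop :=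
  forall c : 'I_N -> 'I_N -> bool, colouring c ->
    ord_contains eF (blue_graph c) \/ ord_contains eG (red_graph c).

Definition is_ordered_ramsey_number (m k : nat) (eF : rel 'I_m) (eG : rel 'I_k)
  (r : nat) : Prop :=
  ramsey_arrow eF eG r /\ (forall N, ramsey_arrow eF eG N -> r <= N).

(* The path on n vertices with an arbitrary total order on its vertices:
   vertex set 'I_n (natural order); pos u is the position of u along the
   path, so u v are adjacent iff their positions are consecutive. Every
   ordered path on n vertices arises this way for some permutation pos. *)
Definition ordered_path (n : nat) (pos : {perm 'I_n}) : rel 'I_n :=
  fun u v => (val (pos u) == (pos v).+1) || (val (pos v) == (pos u).+1).

(* Main.v *)
Require Import Defs.
From mathcomp Require Import all_boot all_fingroup.
From mathcomp Require Import zify.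
From Stdlib Require Import Classical.
Set Implicit Arguments. Unset Strict Implicit. Unset Printing Implicit Defensive.

Lemma count_split (T : Type) (a b : pred T) s :
  count (fun v => a v && b v) s + count (fun v => a v && ~~ b v) s = count a s.
Proof. elim: s => //= x s IH; case: (a x); case: (b x) => /=; lia. Qed.

Lemma count_interval a d M : a + d <= M ->
  count (fun v => (a <= v) && (v < a + d)) (iota 0 M) = d.
Proof.
move=> H. have -> : M = a + (d + (M - (a+d))) by lia.
rewrite !iotaD !count_cat.
rewrite (@eq_in_count _ _ pred0 (iota 0 a)); last first.
  by move=> v; rewrite mem_iota /= => Hv; apply/negbTE/negP => /andP[]; lia.
rewrite (@eq_in_count _ _ predT (iota (0 + a) d)); last first.
  by move=> v; rewrite mem_iota /= => /andP[H1 H2]; apply/andP; split; lia.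
rewrite (@eq_in_count _ _ pred0 (iota (0 + a + d) _)); last first.
  by move=> v; rewrite mem_iota /= => /andP[H1 H2]; apply/negbTE/negP => /andP[]; lia.
by rewrite !count_pred0 count_predT size_iota; lia.
Qed.

Lemma restrict (X : pred nat) M s : s <= count X (iota 0 M) ->
  exists h : nat -> nat, (forall i, i < s -> X (h i) /\ h i < M) /\
    (forall i j, i < j -> j < s -> h i < h j).
Proof.
move=> Hs. set L := filter X (iota 0 M).
have HL : size L = count X (iota 0 M) by rewrite size_filter.
have Hsort : sorted ltn L.
  by apply: sorted_filter; [exact: ltn_trans | exact: iota_ltn_sorted].
exists (nth 0 L); split.
- move=> i Hi. have : nth 0 L i \in L by apply: mem_nth; rewrite HL; lia.
  by rewrite mem_filter mem_iota => /andP[-> /andP[_ ->]].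
- move=> i j Hij Hj. apply: (sorted_ltn_nth ltn_trans 0 Hsort) => //; rewrite inE HL; lia.
Qed.

Lemma minP (P : nat -> Prop) N : P N ->
  exists r, P r /\ forall N', P N' -> r <= N'.
Proof.
suff H : forall m, (exists N, N <= m /\ P N) ->
  exists r, P r /\ forall N', P N' -> r <= N'.
  by move=> HP; apply: (H N); exists N.
elim=> [|m IH].
  case=> N0 [HN HP]; exists 0; split => //.
  have E : N0 = 0 by lia.
  by rewrite -E.
case=> N0 [HN HP].
case: (classic (exists N, N <= m /\ P N)) => [|Hno]; first exact: IH.
exists N0; split => // N1 HP1. case: (leqP N0 N1) => // HN1.
exfalso; apply: Hno; exists N1; split => //; lia.
Qed.

Definition blueA n (pos : {perm 'I_n}) (c : nat -> nat -> bool) M :=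
  exists f : nat -> nat, (forall x : 'I_n, f x < M) /\
    (forall x y : 'I_n, x < y -> f x < f y) /\
    (forall x y : 'I_n, ordered_path pos x y -> c (f x) (f y)).

Definition redpair (c : nat -> nat -> bool) M s :=
  exists X Y : pred nat, s <= count X (iota 0 M) /\ s <= count Y (iota 0 M) /\
    (forall x y, X x -> Y y -> x < y) /\ (forall x y, X x -> Y y -> c x y = false).

Definition Jint d x : pred nat := fun v => (x * d <= v) && (v < x * d + d).

Lemma Jint_lt d x y u v : x < y -> Jint d x u -> Jint d y v -> u < v.
Proof.
rewrite /Jint => Hxy /andP[_ Hu] /andP[Hv _].
have : x.+1 * d <= y * d by apply: leq_mul.
lia.
Qed.

Lemma Jint_bound d x v n : x < n -> Jint d x v -> v < n * d.
Proof.
rewrite /Jint => Hx /andP[_ Hv].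
have : x.+1 * d <= n * d by apply: leq_mul.
lia.
Qed.

Fixpoint Dset (c : nat -> nat -> bool) M (JQ : nat -> pred nat) t : pred nat :=
  match t with
  | 0 => JQ 0
  | t'.+1 => fun v => JQ t'.+1 v && has (fun u => Dset c M JQ t' u && c u v) (iota 0 M)
  end.

Lemma Dset_J c M JQ t v : Dset c M JQ t v -> JQ t v.
Proof. by case: t => [//|t] /= /andP[]. Qed.

Lemma Dset_reach c M JQ t v : Dset c M JQ t v ->
  exists w : nat -> nat, w t = v /\ (forall i, i <= t -> JQ i (w i)) /\
    (forall i, i < t -> c (w i) (w i.+1)).
Proof.
elim: t v => [|t IH] v /=.
  move=> Hv; exists (fun _ => v); split => //; split => // i Hi.
  by have -> : i = 0 by lia.
move=> /andP[Hj /hasP[u _ /andP[Hu Hc]]].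
have [w [Hw1 [Hw2 Hw3]]] := IH u Hu.
exists (fun i => if i == t.+1 then v else w i); split; first by rewrite eqxx.
split.
  move=> i Hi; case: eqP => [->//|Hne]; apply: Hw2; lia.
move=> i Hi. have -> : (i == t.+1) = false by apply/eqP; lia.
case: eqP => [Ei|Hne].
  have Eit : i = t by lia.
  by rewrite Eit Hw1.
apply: Hw3; lia.
Qed.

Lemma lemG n' (pos : {perm 'I_n'.+1}) c M s : (forall i j, c i j = c j i) ->
  0 < s -> n'.+1 * (2 * s) <= M -> blueA pos c M \/ redpair c M s.
Proof.
move=> Hc Hs HM.
pose d := 2 * s.
pose Q t := val ((pos^-1)%g (inord t : 'I_n'.+1)).
have HQ t : Q t < n'.+1 by exact: ltn_ord.
pose JQ t := Jint d (Q t).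
have HJc t : count (JQ t) (iota 0 M) = d.
  rewrite /JQ /Jint; apply: count_interval.
  have : (Q t).+1 * d <= n'.+1 * d by apply: leq_mul; [exact: HQ|].
  lia.
have HJM t v : JQ t v -> v < M.
  move=> /(Jint_bound (HQ t)); lia.
have Hmain : forall t, t <= n' ->
    s <= count (Dset c M JQ t) (iota 0 M) \/ redpair c M s.
  elim=> [|t IH] Ht.
    by left => /=; rewrite HJc; lia.
  case: (IH (ltnW Ht)) => [Hcnt|]; last by right.
  case: (leqP s (count (fun v => JQ t.+1 v && ~~ Dset c M JQ t.+1 v) (iota 0 M))) => Hb.
    right.
    have Hred : forall x y, Dset c M JQ t x ->
        JQ t.+1 y && ~~ Dset c M JQ t.+1 y -> c x y = false.
      move=> x y Hx /andP[Hy]; rewrite /= Hy /= => /hasPn /(_ x).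
      rewrite mem_iota /= (HJM _ _ (Dset_J Hx)) Hx /= => H.
      by apply/negbTE; apply: H.
    have Hne : Q t != Q t.+1.
      apply/eqP => /val_inj /perm_inj /(congr1 val).
      rewrite /= !inordK; lia.
    case: (ltngtP (Q t) (Q t.+1)) => Hq; last by rewrite Hq eqxx in Hne.
      exists (Dset c M JQ t), (fun v => JQ t.+1 v && ~~ Dset c M JQ t.+1 v).
      split => //; split => //; split => //.
      move=> x y Hx /andP[Hy _]; exact: (Jint_lt Hq (Dset_J Hx) Hy).
    exists (fun v => JQ t.+1 v && ~~ Dset c M JQ t.+1 v), (Dset c M JQ t).
    split => //; split => //; split.
      move=> x y /andP[Hx _] Hy; exact: (Jint_lt Hq Hx (Dset_J Hy)).
    by move=> x y Hx Hy; rewrite Hc; apply: Hred.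
  left.
  have := count_split (JQ t.+1) (Dset c M JQ t.+1) (iota 0 M).
  rewrite HJc.
  have -> : count (fun v => JQ t.+1 v && Dset c M JQ t.+1 v) (iota 0 M) =
            count (Dset c M JQ t.+1) (iota 0 M).
    by apply: eq_count => v; case E: (Dset c M JQ t.+1 v); rewrite ?andbT ?andbF ?(Dset_J E).
  rewrite /d; lia.
case: (Hmain n' (leqnn _)) => [Hcnt|]; last by right.
have : has (Dset c M JQ n') (iota 0 M) by rewrite has_count; lia.
move=> /hasP[v _ Hv].
have [w [_ [Hw2 Hw3]]] := Dset_reach Hv.
left; exists (fun u => w (val (pos (inord u)))).
have HQp (x : 'I_n'.+1) : Q (pos x) = x.
  by rewrite /Q inord_val permK.
have HJx (x : 'I_n'.+1) : Jint d x (w (val (pos (inord x)))).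
  by rewrite inord_val -{1}(HQp x); apply: Hw2; rewrite -ltnS.
split.
  move=> x; have := Jint_bound (ltn_ord x) (HJx x); rewrite /d; lia.
split.
  by move=> x y Hxy; apply: (Jint_lt Hxy (HJx x) (HJx y)).
move=> x y; rewrite /ordered_path !inord_val => /orP[] /eqP E.
  rewrite Hc E; apply: Hw3; have := ltn_ord (pos x); rewrite E ltnS; apply.
rewrite E; apply: Hw3; have := ltn_ord (pos y); rewrite E ltnS; apply.
Qed.

Definition redB (c : nat -> nat -> bool) M m (eB : nat -> nat -> bool) :=
  exists g : nat -> nat, (forall i, i < m -> g i < M) /\
    (forall i j, i < j -> j < m -> g i < g j) /\
    (forall i j, i < j -> j < m -> eB i j -> c (g i) (g j) = false).

Lemma blue_transfer n (pos : {perm 'I_n}) c h s M :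
  (forall i, i < s -> h i < M) -> (forall i j, i < j -> j < s -> h i < h j) ->
  blueA pos (fun i j => c (h i) (h j)) s -> blueA pos c M.
Proof.
move=> H1 H2 [f [Hf1 [Hf2 Hf3]]].
exists (fun x => h (f x)); split; first by move=> x; apply: H1.
split; last by move=> x y /Hf3.
by move=> x y Hxy; apply: H2; [apply: Hf2 | apply: Hf1].
Qed.

Lemma mainR n' (pos : {perm 'I_n'.+1}) l : forall c, (forall i j, c i j = c j i) ->
  forall M, (2 * n'.+1) ^ l <= M -> forall m, m <= 2 ^ l ->
  forall eB : nat -> nat -> bool, blueA pos c M \/ redB c M m eB.
Proof.
elim: l => [|l IH] c Hc M HM m Hm eB.
  right; exists (fun _ => 0); rewrite expn0 in HM Hm.
  split; first by move=> i Hi; lia.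
  split; move=> i j Hij Hj; lia.
set s := (2 * n'.+1) ^ l.
have Hs : 0 < s by rewrite expn_gt0.
have HM' : n'.+1 * (2 * s) <= M.
  move: HM; rewrite expnS -/s.
  have -> : n'.+1 * (2 * s) = 2 * n'.+1 * s by rewrite mulnCA mulnA.
  done.
case: (lemG pos Hc Hs HM') => [|[X [Y [HX [HY [Hord Hred]]]]]]; first by left.
have [hX [HX1 HX2]] := restrict HX.
have [hY [HY1 HY2]] := restrict HY.
set m1 := minn m (2 ^ l).
set m2 := m - m1.
have Hm1 : m1 <= 2 ^ l by rewrite geq_minr.
have Hm2 : m2 <= 2 ^ l by move: Hm; rewrite expnS /m2 /m1; lia.
have HcX : forall i j, c (hX i) (hX j) = c (hX j) (hX i) by move=> i j; apply: Hc.
have HcY : forall i j, c (hY i) (hY j) = c (hY j) (hY i) by move=> i j; apply: Hc.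
have HXM : forall i, i < s -> hX i < M by move=> i /HX1 [].
have HYM : forall i, i < s -> hY i < M by move=> i /HY1 [].
case: (IH _ HcX s (leqnn _) m1 Hm1 eB) => [Hb|[gL [HL1 [HL2 HL3]]]].
  by left; apply: (blue_transfer HXM HX2 Hb).
case: (IH _ HcY s (leqnn _) m2 Hm2 (fun i j => eB (i + m1) (j + m1)))
  => [Hb|[gR [HR1 [HR2 HR3]]]].
  by left; apply: (blue_transfer HYM HY2 Hb).
right; exists (fun i => if i < m1 then hX (gL i) else hY (gR (i - m1))).
split.
  move=> i Hi; case: ifP => Hi1.
    by apply: HXM; apply: HL1.
  by apply: HYM; apply: HR1; rewrite /m2; lia.
split.
  move=> i j Hij Hj; case: ifP => Hi1; case: ifP => Hj1.
  - by apply: HX2; [apply: HL2 | apply: HL1].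
  - apply: Hord; [exact: (proj1 (HX1 _ (HL1 _ Hi1))) |].
    by apply: (proj1 (HY1 _ _)); apply: HR1; rewrite /m2; lia.
  - lia.
  - by apply: HY2; [apply: HR2; lia | apply: HR1; rewrite /m2; lia].
move=> i j Hij Hj He; case: ifP => Hi1; case: ifP => Hj1.
- by apply: HL3.
- apply: Hred; [exact: (proj1 (HX1 _ (HL1 _ Hi1))) |].
  by apply: (proj1 (HY1 _ _)); apply: HR1; rewrite /m2; lia.
- lia.
- apply: HR3; [lia | rewrite /m2; lia |].
  by rewrite !subnK //; lia.
Qed.

Lemma ordered_path_irr n (pos : {perm 'I_n}) x : ordered_path pos x x = false.
Proof. by rewrite /ordered_path orbb (ltn_eqF (ltnSn _)). Qed.

Lemma ordered_path_sym n (pos : {perm 'I_n}) x y :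
  ordered_path pos x y = ordered_path pos y x.
Proof. by rewrite /ordered_path orbC. Qed.

Lemma bound_aux k n : n <= 2 ^ k -> (2 * n) ^ k <= 2 ^ (k * k.+1).
Proof.
rewrite (mulnC k) expnM.
case: k => [|k'] Hnk; first by rewrite !expn0.
rewrite leq_exp2r // expnS; lia.
Qed.

Theorem corollaryc (n : nat) (pos : {perm 'I_n}) : 1 <= n ->
  exists r : nat,
    is_ordered_ramsey_number (ordered_path pos) (ordered_path pos) r /\
    r <= 2 ^ (up_log 2 n * (up_log 2 n).+1).
Proof.
case: n pos => [//|n'] pos _.
set k := up_log 2 n'.+1.
set N0 := (2 * n'.+1) ^ k.
have Hnk : n'.+1 <= 2 ^ k by apply: up_logP.
have Hbound : N0 <= 2 ^ (k * k.+1).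
  exact: bound_aux.
have Harrow : ramsey_arrow (ordered_path pos) (ordered_path pos) N0.
  move=> c Hc.
  pose cN (i j : nat) := match (insub i : option 'I_N0), (insub j : option 'I_N0) with
    | Some a, Some b => c a b | _, _ => false end.
  have HcN : forall i j, cN i j = cN j i.
    move=> i j; rewrite /cN.
    by case: (insub i) => [a|]; case: (insub j) => [b|] //; rewrite Hc.
  have HcNv : forall a b : 'I_N0, cN a b = c a b by move=> a b; rewrite /cN !valK.
  case: (mainR pos HcN (leqnn N0) Hnk (fun i j => ordered_path pos (inord i) (inord j)))
    => [[f [Hf1 [Hf2 Hf3]]]|[g [Hg1 [Hg2 Hg3]]]].
    left; exists (fun x => Ordinal (Hf1 x)); split.
      by move=> x y Hxy; apply: Hf2.
    move=> x y Hxy; rewrite /blue_graph -HcNv /= Hf3 // andbT.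
    have Hne : x != y by apply/eqP => E; rewrite E ordered_path_irr in Hxy.
    case: (ltngtP x y) => H.
    - by have := Hf2 _ _ H; rewrite neq_ltn => ->.
    - by have := Hf2 _ _ H; rewrite neq_ltn => ->; rewrite orbT.
    - by move/val_inj: H => E; rewrite E eqxx in Hne.
  right; exists (fun x : 'I_n'.+1 => Ordinal (Hg1 x (ltn_ord x))); split.
    by move=> x y Hxy; apply: Hg2.
  move=> x y Hxy; rewrite /red_graph -HcNv /=.
  have Hne : x != y by apply/eqP => E; rewrite E ordered_path_irr in Hxy.
  case: (ltngtP x y) => H.
  - have := Hg2 _ _ H (ltn_ord y); rewrite neq_ltn => ->.
    by rewrite Hg3 // !inord_val.
  - have := Hg2 _ _ H (ltn_ord x); rewrite neq_ltn => ->; rewrite orbT /=.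
    by rewrite HcN Hg3 // !inord_val ordered_path_sym.
  - by move/val_inj: H => E; rewrite E eqxx in Hne.
have [r [Hr1 Hr2]] := minP Harrow.
exists r; split; first by split.
exact: (leq_trans (Hr2 _ Harrow) Hbound).
Qed.
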